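(* Let $p\ge 2$ be an integer. For all $\mathbf r=(r_1,r_2)\in\mathbb Z^2$, \[ {\rm coeff}_{\left[\zeta_1^{r_1},\,\zeta_{2}^{r_2}\right]} F(\zeta_1,\zeta_2;q)=\mathbb{G}_{\mathbf{r}}(\tau). \]
   Context: $q:=e^{2\pi i\tau}$, $\tau\in\mathbb H$. $Q(\mathbf n):=n_1^2+n_2^2-n_1n_2$; $\mathbb N=\{1,2,3,\dots\}$. \begin{align*} F(\zeta_1,\zeta_2;q)&:=\sum_{n_1,n_2\in\mathbb Z}\frac{q^{pQ\left(n_1-\frac1p,\,n_2-\frac1p\right)}}{\left(1-\zeta_1^{-1}\right)\left(1-\zeta_2^{-1}\right)\left(1-\zeta_1^{-1}\zeta_2^{-1}\right)}\Big(\zeta_1^{n_1-1} \zeta_2^{n_2-1} -\zeta_1^{-n_1+n_2-1}\zeta_2^{n_2-1}\\ &\qquad-\zeta_1^{n_1-1}\zeta_2^{-n_2+n_1-1}+\zeta_1^{-n_2-1} \zeta_2^{-n_2+n_1-1}+\zeta_1^{-n_1+n_2-1} \zeta_2^{-n_1-1}-\zeta_1^{-n_2-1}\zeta_2^{-n_1-1}\Big), \end{align*} where each summand is a Laurent polynomial in $\zeta_1,\zeta_2$, and ${\rm coeff}_{[\zeta_1^{r_1},\zeta_2^{r_2}]}$ is the coefficient of $\zeta_1^{r_1}\zeta_2^{r_2}$. For $\boldsymbol\lambda\in\mathbb Q^2$, \begin{multline*} \mathbb{G}_{\boldsymbol{\lambda}}(\tau):=\sum_{\mathbf{n} \in \mathbb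 N^2} {\rm min}(n_1,n_2)\,q^{p Q\left(\mathbf n+\boldsymbol{\lambda}- \left(\frac1p, \frac1p\right)\right)} \Big(1-q^{2\left(n_1+\lambda_1\right)-\left(n_2+\lambda_2\right)}-q^{2\left(n_2+\lambda_2\right)-\left(n_1+\lambda_1\right)}\\+q^{3\left(n_1+\lambda_1\right)}+q^{3\left(n_2+\lambda_2\right)}-q^{2\left(n_1+\lambda_1\right)+2\left(n_2+\lambda_2\right)}\Big). \end{multline*} *)

(* Defs.v *)
From Stdlib Require Import Reals ZArith List.
From Coquelicot Require Import Coquelicot.
Open Scope R_scope.

Definition cexp (z : C) : C :=
  (exp (Re z) * cos (Im z), exp (Re z) * sin (Im z)).

Definition qpow (tau : C) (x : R) : C :=
  cexp (Cmult (RtoC (2 * PI * x)) (Cmult Ci tau)).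

Definition Qf (x1 x2 : R) : R := x1 ^ 2 + x2 ^ 2 - x1 * x2.

(* ---- Laurent polynomials in zeta1, zeta2 with integer coefficients ----
   represented as finite lists of terms ((e1,e2), c) meaning c*zeta1^e1*zeta2^e2 *)
Definition lpoly := list ((Z * Z) * Z).

Definition lcoeff (P : lpoly) (r1 r2 : Z) : Z :=
  fold_right (fun t acc =>
     if (Z.eqb (fst (fst t)) r1 && Z.eqb (snd (fst t)) r2)%bool
     then (snd t + acc)%Z else acc) 0%Z P.

Definition lmul (A B : lpoly) : lpoly :=
  flat_map (fun a => map (fun b =>
     ((fst (fst a) + fst (fst b), snd (fst a) + snd (fst b))%Z,
      (snd a * snd b)%Z)) B) A.

Definition Fden : lpoly :=
  lmul (lmul ((0%Z,0%Z,1%Z) :: (-1,0,-1)%Z :: nil)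
             ((0%Z,0%Z,1%Z) :: (0,-1,-1)%Z :: nil))
       ((0%Z,0%Z,1%Z) :: (-1,-1,-1)%Z :: nil).

Definition Fnum (n1 n2 : Z) : lpoly :=
  ((n1 - 1, n2 - 1), 1)%Z
  :: ((- n1 + n2 - 1, n2 - 1), -1)%Z
  :: ((n1 - 1, - n2 + n1 - 1), -1)%Z
  :: ((- n2 - 1, - n2 + n1 - 1), 1)%Z
  :: ((- n1 + n2 - 1, - n1 - 1), 1)%Z
  :: ((- n2 - 1, - n1 - 1), -1)%Z :: nil.

Definition is_quotient (g : lpoly) (n1 n2 : Z) : Prop :=
  forall m1 m2, lcoeff (lmul g Fden) m1 m2 = lcoeff (Fnum n1 n2) m1 m2.

Definition Fcoeff_partial (p : Z) (g : Z -> Z -> lpoly) (tau : C)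
    (r1 r2 : Z) (N : nat) : C :=
  sum_n (fun i => sum_n (fun j =>
    let n1 := (Z.of_nat i - Z.of_nat N)%Z in
    let n2 := (Z.of_nat j - Z.of_nat N)%Z in
    Cmult (qpow tau (IZR p * Qf (IZR n1 - / IZR p) (IZR n2 - / IZR p)))
          (RtoC (IZR (lcoeff (g n1 n2) r1 r2)))) (2 * N)) (2 * N).

(* square partial sums (0 <= n1, n2 <= N; the n1 = 0 or n2 = 0 terms vanish
   since min(n1,n2) = 0, so this is the sum over 1 <= n1, n2 <= N) of the series G_lambda(tau) *)
Definition G_partial (p : Z) (tau : C) (l1 l2 : R) (N : nat) : C :=
  sum_n (fun i => sum_n (fun j =>
    let n1 := INR i in
    let n2 := INR j in
    let a := n1 + l1 in
    let b := n2 + l2 in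
    Cmult (RtoC (INR (Nat.min i j)))
     (Cmult (qpow tau (IZR p * Qf (a - / IZR p) (b - / IZR p)))
       (Cplus (Cplus (Cplus (Cplus (Cplus (RtoC 1)
          (Copp (qpow tau (2 * a - b))))
          (Copp (qpow tau (2 * b - a))))
          (qpow tau (3 * a)))
          (qpow tau (3 * b)))
          (Copp (qpow tau (2 * a + 2 * b)))))) N) N.

(* Main.v *)
Require Import Defs.
From Stdlib Require Import Reals ZArith List Lia Lra Permutation.
From Coquelicot Require Import Coquelicot.

Open Scope Z_scope.

Definition Mz (a b : Z) : Z := Z.max 0 (Z.min a b).

Lemma Mz_0 a b : a <= 0 -> Mz a b = 0. Proof. unfold Mz; lia. Qed.
Lemma Mz_0' a b : b <= 0 -> Mz a b = 0. Proof. unfold Mz; lia. Qed.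

Definition zsum {A} (f : A -> Z) (l : list A) : Z :=
  fold_right (fun x acc => f x + acc) 0 l.

Lemma zsum_plus {A} (f g : A -> Z) l : zsum (fun x => f x + g x) l = zsum f l + zsum g l.
Proof. induction l; simpl; lia. Qed.
Lemma zsum_mul {A} c (f : A -> Z) l : c * zsum f l = zsum (fun x => c * f x) l.
Proof. induction l; simpl; lia. Qed.
Lemma zsum_ext {A} (f g : A -> Z) l : (forall x, f x = g x) -> zsum f l = zsum g l.
Proof. intros H; induction l; simpl; rewrite ?H; lia. Qed.
Lemma zsum_swap {A B} (F : A -> B -> Z) la lb :
  zsum (fun a => zsum (fun b => F a b) lb) la = zsum (fun b => zsum (fun a => F a b) la) lb.
Proof.
  induction la; simpl.
  - induction lb; simpl; lia.
  - rewrite IHla. rewrite <- zsum_plus. reflexivity.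
Qed.

Lemma Delta (a b m1 m2 : Z) :
  zsum (fun d => snd d * Mz (a - (m1 - fst (fst d))) (b - (m2 - snd (fst d)))) Fden
  = if ((a - 1 =? m1) && (b - 1 =? m2))%bool then 1 else 0.
Proof.
  cbv [zsum Fden lmul flat_map map fold_right fst snd app].
  unfold Mz.
  destruct (a - 1 =? m1) eqn:E1; destruct (b - 1 =? m2) eqn:E2; cbn [andb];
  rewrite ?Z.eqb_eq, ?Z.eqb_neq in *; lia.
Qed.

Definition Wl : list (Z * (Z -> Z -> Z * Z)) :=
  (1, fun a b => (a, b)) :: (-1, fun a b => (- a + b, b)) ::
  (-1, fun a b => (a, - b + a)) :: (1, fun a b => (- b, - b + a)) ::
  (1, fun a b => (- a + b, - a)) :: (-1, fun a b => (- b, - a)) :: nil.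

Definition multW (n1 n2 r1 r2 : Z) : Z :=
  zsum (fun w => fst w * Mz (fst (snd w n1 n2) - r1) (snd (snd w n1 n2) - r2)) Wl.

Lemma mult_vanish n1 n2 r1 r2 :
  Z.abs n1 + Z.abs n2 < Z.abs r1 \/ Z.abs n1 + Z.abs n2 < Z.abs r2 ->
  multW n1 n2 r1 r2 = 0.
Proof.
  cbv [multW zsum Wl fold_right fst snd].
  intros H.
  assert (Hc : Z.abs n1 + Z.abs n2 < r1 \/ r1 < - (Z.abs n1 + Z.abs n2) \/
               Z.abs n1 + Z.abs n2 < r2 \/ r2 < - (Z.abs n1 + Z.abs n2)) by lia.
  clear H. destruct Hc as [H|[H|[H|H]]].
  - rewrite !(Mz_0 _ _) by lia. lia.
  - unfold Mz; lia.
  - rewrite !(Mz_0' _ _) by lia. lia.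
  - unfold Mz; lia.
Qed.

Definition rng (R : nat) : list Z := map (fun i => Z.of_nat i - Z.of_nat R) (seq 0 (2 * R + 1)).

Lemma In_rng R x : In x (rng R) <-> Z.abs x <= Z.of_nat R.
Proof.
  unfold rng; rewrite in_map_iff; split.
  - intros [i [<- Hi]]; apply in_seq in Hi; lia.
  - intros H; exists (Z.to_nat (x + Z.of_nat R)); split; [lia|]. apply in_seq; lia.
Qed.

Lemma NoDup_rng R : NoDup (rng R).
Proof.
  unfold rng; apply FinFun.Injective_map_NoDup; [intros i j H; lia | apply seq_NoDup].
Qed.

Lemma NoDup_prod {A B} (l1 : list A) (l2 : list B) :
  NoDup l1 -> NoDup l2 -> NoDup (list_prod l1 l2).
Proof.
  intros H1 H2; induction H1 as [|a l1 Ha H1 IH]; simpl; [constructor|].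
  apply NoDup_app; auto.
  - apply FinFun.Injective_map_NoDup; auto. intros x y H; congruence.
  - intros [x y] Hx Hy. apply in_map_iff in Hx. destruct Hx as [z [Hz _]].
    inversion Hz; subst. apply in_prod_iff in Hy. tauto.
Qed.

Definition box (R : nat) : list (Z * Z) := list_prod (rng R) (rng R).

Lemma In_box R x y : In (x, y) (box R) <-> Z.abs x <= Z.of_nat R /\ Z.abs y <= Z.of_nat R.
Proof. unfold box; rewrite in_prod_iff, !In_rng; tauto. Qed.

Lemma NoDup_box R : NoDup (box R).
Proof. apply NoDup_prod; apply NoDup_rng. Qed.

Definition gdef (n1 n2 : Z) : lpoly :=
  map (fun r => (r, multW n1 n2 (fst r) (snd r))) (box (Z.to_nat (Z.abs n1 + Z.abs n2))).

Lemma lcoeff_map_nodup (h : Z * Z -> Z) l x y :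
  NoDup l ->
  (In (x, y) l -> lcoeff (map (fun r => (r, h r)) l) x y = h (x, y)) /\
  (~ In (x, y) l -> lcoeff (map (fun r => (r, h r)) l) x y = 0).
Proof.
  intros H; induction H as [|[a b] l Ha H IH]; simpl.
  - split; [tauto | reflexivity].
  - destruct IH as [IH1 IH2].
    destruct ((a =? x) && (b =? y))%bool eqn:E.
    + apply Bool.andb_true_iff in E; rewrite !Z.eqb_eq in E; destruct E; subst.
      split; intros; [|tauto]. rewrite IH2; auto. simpl; lia.
    + split.
      * intros [Hab|Hin]; [inversion Hab; subst; rewrite !Z.eqb_refl in E; discriminate|auto].
      * intros Hn; apply IH2; tauto.
Qed.

Lemma lcoeff_g n1 n2 x y : lcoeff (gdef n1 n2) x y = multW n1 n2 x y.
Proof.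
  unfold gdef.
  destruct (lcoeff_map_nodup (fun r => multW n1 n2 (fst r) (snd r))
              (box (Z.to_nat (Z.abs n1 + Z.abs n2))) x y (NoDup_box _)) as [H1 H2].
  destruct (Z_le_dec (Z.abs x) (Z.abs n1 + Z.abs n2));
  destruct (Z_le_dec (Z.abs y) (Z.abs n1 + Z.abs n2)).
  - rewrite H1; auto. apply In_box; lia.
  - rewrite H2, mult_vanish; auto; [lia|]. rewrite In_box; lia.
  - rewrite H2, mult_vanish; auto; [lia|]. rewrite In_box; lia.
  - rewrite H2, mult_vanish; auto; [lia|]. rewrite In_box; lia.
Qed.

Lemma lcoeff_app A B x y : lcoeff (A ++ B) x y = lcoeff A x y + lcoeff B x y.
Proof.
  induction A as [|a A IH]; simpl; [reflexivity|].
  destruct (_ && _)%bool; rewrite IH; lia.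
Qed.

Lemma lcoeff_cons t l m1 m2 : lcoeff (t :: l) m1 m2 =
  (if ((fst (fst t) =? m1) && (snd (fst t) =? m2))%bool then snd t else 0) + lcoeff l m1 m2.
Proof. simpl. destruct (_ && _)%bool; lia. Qed.
Lemma zsum_cons {A} (f : A -> Z) x l : zsum f (x :: l) = f x + zsum f l.
Proof. reflexivity. Qed.

Lemma lcoeff_lmul A B m1 m2 :
  lcoeff (lmul A B) m1 m2 =
  zsum (fun b => snd b * lcoeff A (m1 - fst (fst b)) (m2 - snd (fst b))) B.
Proof.
  induction A as [|a A IH].
  - unfold lmul; simpl. induction B; simpl; lia.
  - change (lmul (a :: A) B) with (map (fun b =>
     ((fst (fst a) + fst (fst b), snd (fst a) + snd (fst b))%Z,
      (snd a * snd b)%Z)) B ++ lmul A B).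
    rewrite lcoeff_app, IH. clear IH.
    induction B as [|b B IHB]; [reflexivity|].
    rewrite map_cons, !lcoeff_cons, !zsum_cons, lcoeff_cons.
    match goal with |- ?X + ?Y + (?Z + ?W) = _ => transitivity (X + Z + (Y + W)); [lia|] end.
    rewrite IHB. clear IHB. f_equal. cbn [fst snd].
    destruct (fst (fst a) + fst (fst b) =? m1) eqn:E1;
    destruct (fst (fst a) =? m1 - fst (fst b)) eqn:E1';
    destruct (snd (fst a) + snd (fst b) =? m2) eqn:E2;
    destruct (snd (fst a) =? m2 - snd (fst b)) eqn:E2'; cbn [andb fst snd];
    rewrite ?Z.eqb_eq, ?Z.eqb_neq in *; try lia.
Qed.

Lemma Fnum_map n1 n2 :
  Fnum n1 n2 = map (fun w => ((fst (snd w n1 n2) - 1, snd (snd w n1 n2) - 1), fst w)) Wl.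
Proof. reflexivity. Qed.

Lemma lcoeff_map {A} (E : A -> Z * Z) (c : A -> Z) l m1 m2 :
  lcoeff (map (fun w => (E w, c w)) l) m1 m2 =
  zsum (fun w => if ((fst (E w) =? m1) && (snd (E w) =? m2))%bool then c w else 0) l.
Proof. induction l; simpl; [reflexivity|]. rewrite IHl. destruct (_ && _)%bool; lia. Qed.

Lemma gdef_quot n1 n2 : is_quotient (gdef n1 n2) n1 n2.
Proof.
  intros m1 m2.
  rewrite lcoeff_lmul, Fnum_map, lcoeff_map.
  transitivity (zsum (fun b => zsum (fun w => snd b * (fst w *
     Mz (fst (snd w n1 n2) - (m1 - fst (fst b))) (snd (snd w n1 n2) - (m2 - snd (fst b))))) Wl) Fden).
  { apply zsum_ext; intros b. rewrite lcoeff_g. unfold multW. apply zsum_mul. }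
  rewrite zsum_swap. apply zsum_ext; intros w.
  transitivity (fst w * zsum (fun b => snd b *
     Mz (fst (snd w n1 n2) - (m1 - fst (fst b))) (snd (snd w n1 n2) - (m2 - snd (fst b)))) Fden).
  { rewrite zsum_mul. apply zsum_ext; intros; lia. }
  rewrite Delta. simpl. destruct (_ && _)%bool; lia.
Qed.
Close Scope Z_scope.
Open Scope R_scope.

Definition csum {A} (f : A -> C) (l : list A) : C :=
  fold_right (fun x acc => Cplus (f x) acc) (RtoC 0) l.
Definition rsum {A} (f : A -> R) (l : list A) : R :=
  fold_right (fun x acc => f x + acc) 0 l.

Lemma csum_app {A} (f : A -> C) l1 l2 : csum f (l1 ++ l2) = (csum f l1 + csum f l2)%C.
Proof. induction l1; simpl. - ring. - rewrite IHl1. ring. Qed.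
Lemma csum_perm {A} (f : A -> C) l1 l2 : Permutation l1 l2 -> csum f l1 = csum f l2.
Proof. induction 1; simpl; try congruence. ring. Qed.
Lemma csum_map {A B} (f : B -> C) (g : A -> B) l : csum f (map g l) = csum (fun x => f (g x)) l.
Proof. induction l; simpl; congruence. Qed.
Lemma csum_ext {A} (f g : A -> C) l : (forall x, f x = g x) -> csum f l = csum g l.
Proof. intros H; induction l; simpl; congruence. Qed.
Lemma csum_plus {A} (f g : A -> C) l : csum (fun x => f x + g x)%C l = (csum f l + csum g l)%C.
Proof. induction l; simpl. - ring. - rewrite IHl. ring. Qed.
Lemma csum_opp {A} (f : A -> C) l : csum (fun x => - f x)%C l = (- csum f l)%C.
Proof. induction l; simpl. - ring. - rewrite IHl. ring. Qed.
Lemma csum_filter {A} (P : A -> bool) (f : A -> C) l :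
  csum f l = (csum f (filter P l) + csum f (filter (fun x => negb (P x)) l))%C.
Proof. induction l; simpl. - ring. - destruct (P a); simpl; rewrite IHl; ring. Qed.
Lemma csum_prod {A B} (f : A * B -> C) l1 l2 :
  csum f (list_prod l1 l2) = csum (fun a => csum (fun b => f (a, b)) l2) l1.
Proof. induction l1; simpl; [reflexivity|]. rewrite csum_app, csum_map, IHl1. reflexivity. Qed.

Lemma rsum_ext_le {A} (f g : A -> R) l : (forall x, f x <= g x) -> rsum f l <= rsum g l.
Proof. intros H; induction l; simpl; [lra|]. specialize (H a). lra. Qed.
Lemma rsum_nonneg {A} (f : A -> R) l : (forall x, 0 <= f x) -> 0 <= rsum f l.
Proof. intros H; induction l; simpl; [lra|]. specialize (H a). lra. Qed.
Lemma Cmod_csum {A} (f : A -> C) l : Cmod (csum f l) <= rsum (fun x => Cmod (f x)) l.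
Proof.
  induction l; simpl. - rewrite Cmod_0; lra.
  - eapply Rle_trans; [apply Cmod_triangle|]. lra.
Qed.
Lemma rsum_filter {A} (P : A -> bool) (f : A -> R) l :
  rsum f (filter P l) = rsum (fun x => if P x then f x else 0) l.
Proof. induction l; simpl; [reflexivity|]. destruct (P a); simpl; rewrite IHl; lra. Qed.
Lemma rsum_prod {A B} (f : A * B -> R) l1 l2 :
  rsum f (list_prod l1 l2) = rsum (fun a => rsum (fun b => f (a, b)) l2) l1.
Proof.
  assert (Happ : forall l l', rsum f (l ++ l') = rsum f l + rsum f l').
  { intros l l'; induction l; simpl; lra. }
  induction l1; simpl; [reflexivity|]. rewrite Happ, IHl1. f_equal.
  clear. induction l2; simpl; congruence.
Qed.
Lemma rsum_ext_eq {A} (f g : A -> R) l : (forall x, f x = g x) -> rsum f l = rsum g l.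
Proof. intros H; induction l; simpl; congruence. Qed.
Lemma rsum_plus {A} (f g : A -> R) l : rsum (fun x => f x + g x) l = rsum f l + rsum g l.
Proof. induction l; simpl; lra. Qed.
Lemma rsum_scal {A} c (f : A -> R) l : rsum (fun x => c * f x) l = c * rsum f l.
Proof. induction l; simpl; [ring|]. rewrite IHl; ring. Qed.
Lemma rsum_scal_r {A} c (f : A -> R) l : rsum (fun x => f x * c) l = rsum f l * c.
Proof. induction l; simpl; [ring|]. rewrite IHl; ring. Qed.

Definition ee (i : Z) : R := (/ 2) ^ (Z.abs_nat i).
Definition tl (m : nat) (i : Z) : R := if (Z.abs i <=? Z.of_nat m)%Z then 0 else ee i.

Lemma ee_pos i : 0 < ee i.
Proof. unfold ee; apply pow_lt; lra. Qed.
Lemma tl_nonneg m i : 0 <= tl m i.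
Proof. unfold tl; destruct (_ <=? _)%Z; [lra|]. apply Rlt_le, ee_pos. Qed.

Lemma rng_S M : Permutation (rng (S M)) ((- Z.of_nat (S M))%Z :: Z.of_nat (S M) :: rng M).
Proof.
  apply NoDup_Permutation.
  - apply NoDup_rng.
  - constructor; [|constructor; [|apply NoDup_rng]].
    + intros [H|H]; [lia|]. apply In_rng in H; lia.
    + intros H; apply In_rng in H; lia.
  - intros x; rewrite In_rng; simpl; rewrite In_rng; lia.
Qed.

Lemma rsum_perm {A} (f : A -> R) l1 l2 : Permutation l1 l2 -> rsum f l1 = rsum f l2.
Proof. induction 1; simpl; lra. Qed.

Lemma rsum_cons {A} (f : A -> R) x l : rsum f (x :: l) = f x + rsum f l.
Proof. reflexivity. Qed.

Lemma rsum_ee M : rsum ee (rng M) <= 3.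
Proof.
  assert (H : forall M, rsum ee (rng M) = 3 - 2 * (/2) ^ M).
  { induction M0.
    - unfold rng; simpl. unfold ee; simpl. lra.
    - rewrite (rsum_perm _ _ _ (rng_S M0)), !rsum_cons. rewrite IHM0.
      unfold ee. replace (Z.abs_nat (- Z.of_nat (S M0))) with (S M0) by lia.
      replace (Z.abs_nat (Z.of_nat (S M0))) with (S M0) by lia.
      simpl. lra. }
  rewrite H. assert (0 < (/2)^M) by (apply pow_lt; lra). lra.
Qed.

Lemma rsum_tl m M : rsum (tl m) (rng M) <= 2 * (/2) ^ m.
Proof.
  assert (H : forall M, rsum (tl m) (rng M) + 2 * (/2) ^ (Nat.max m M) <= 2 * (/2) ^ m).
  { induction M0.
    - unfold rng; simpl. unfold tl; simpl.
      replace (Nat.max m 0) with m by lia.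
      destruct (Z.leb_spec 0 (Z.of_nat m)); [lra|lia].
    - rewrite (rsum_perm _ _ _ (rng_S M0)), !rsum_cons.
      unfold tl at 1 2.
      destruct (Nat.le_gt_cases (S M0) m).
      + destruct (Z.leb_spec (Z.abs (- Z.of_nat (S M0))) (Z.of_nat m)); [|lia].
        destruct (Z.leb_spec (Z.abs (Z.of_nat (S M0))) (Z.of_nat m)); [|lia].
        replace (Nat.max m (S M0)) with (Nat.max m M0) by lia. lra.
      + destruct (Z.leb_spec (Z.abs (- Z.of_nat (S M0))) (Z.of_nat m)); [lia|].
        destruct (Z.leb_spec (Z.abs (Z.of_nat (S M0))) (Z.of_nat m)); [lia|].
        replace (Nat.max m (S M0)) with (S M0) by lia.
        replace (Nat.max m M0) with M0 in IHM0 by lia.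
        unfold ee. replace (Z.abs_nat (- Z.of_nat (S M0))) with (S M0) by lia.
        replace (Z.abs_nat (Z.of_nat (S M0))) with (S M0) by lia.
        simpl. simpl in IHM0. lra. }
  specialize (H M). assert (0 < (/2) ^ (Nat.max m M)) by (apply pow_lt; lra). lra.
Qed.

Definition bb (n : Z * Z) : R := ee (fst n) * ee (snd n).

Definition zz_dec : forall x y : Z * Z, {x = y} + {x <> y}.
Proof. decide equality; apply Z.eq_dec. Defined.

Lemma core (f : Z * Z -> C) K (hK : 0 <= K) (hb : forall n, Cmod (f n) <= K * bb n)
  l m M : NoDup l -> incl l (box M) ->
  (forall n, In n (box m) -> f n <> RtoC 0 -> In n l) ->
  Cmod (csum f (box M) - csum f l)%C <= K * (12 * (/2) ^ m).
Proof.
  intros Hl Hinc Hcov.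
  set (P := fun n => if in_dec zz_dec n l then true else false).
  rewrite (csum_filter P f (box M)).
  assert (Hp : Permutation (filter P (box M)) l).
  { apply NoDup_Permutation; [apply NoDup_filter, NoDup_box | exact Hl|].
    intros x; rewrite filter_In; unfold P.
    destruct (in_dec zz_dec x l); split; try tauto; try discriminate.
    intros H; split; auto. intros [_ H]; discriminate. }
  rewrite (csum_perm _ _ _ Hp).
  replace (csum f l + csum f (filter (fun x => negb (P x)) (box M)) - csum f l)%C
    with (csum f (filter (fun x => negb (P x)) (box M))) by ring.
  eapply Rle_trans; [apply Cmod_csum|]. rewrite rsum_filter.
  eapply Rle_trans.
  { apply (rsum_ext_le _ (fun n => K * (tl m (fst n) * ee (snd n) + ee (fst n) * tl m (snd n)))).
    intros [n1 n2]. simpl.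
    assert (H0 : 0 <= K * (tl m n1 * ee n2 + ee n1 * tl m n2)).
    { apply Rmult_le_pos; auto.
      pose proof (tl_nonneg m n1); pose proof (tl_nonneg m n2);
      pose proof (ee_pos n1); pose proof (ee_pos n2). nra. }
    destruct (P (n1, n2)) eqn:EP; simpl; auto.
    destruct (Z_le_dec (Z.abs n1) (Z.of_nat m)); destruct (Z_le_dec (Z.abs n2) (Z.of_nat m)).
    - assert (Hf : f (n1, n2) = RtoC 0).
      { destruct (Ceq_dec (f (n1, n2)) (RtoC 0)) as [e|e]; auto.
        exfalso. assert (In (n1, n2) l) by (apply Hcov; auto; apply In_box; lia).
        unfold P in EP. destruct (in_dec zz_dec (n1, n2) l); [discriminate|tauto]. }
      rewrite Hf, Cmod_0. auto.
    - eapply Rle_trans; [apply hb|]. unfold bb; simpl. apply Rmult_le_compat_l; auto.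
      unfold tl. destruct (Z.leb_spec (Z.abs n1) (Z.of_nat m)); [|lia].
      destruct (Z.leb_spec (Z.abs n2) (Z.of_nat m)); [lia|].
      pose proof (ee_pos n1); pose proof (ee_pos n2). nra.
    - eapply Rle_trans; [apply hb|]. unfold bb; simpl. apply Rmult_le_compat_l; auto.
      unfold tl. destruct (Z.leb_spec (Z.abs n1) (Z.of_nat m)); [lia|].
      destruct (Z.leb_spec (Z.abs n2) (Z.of_nat m)); [|lia].
      pose proof (ee_pos n1); pose proof (ee_pos n2). nra.
    - eapply Rle_trans; [apply hb|]. unfold bb; simpl. apply Rmult_le_compat_l; auto.
      unfold tl. destruct (Z.leb_spec (Z.abs n1) (Z.of_nat m)); [lia|].
      destruct (Z.leb_spec (Z.abs n2) (Z.of_nat m)); [lia|].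
      pose proof (ee_pos n1); pose proof (ee_pos n2). nra. }
  rewrite rsum_scal, rsum_plus. unfold box. rewrite !rsum_prod. simpl.
  rewrite (rsum_ext_eq _ (fun a => tl m a * rsum ee (rng M))), (rsum_ext_eq (fun a => rsum _ _) (fun a => ee a * rsum (tl m) (rng M))).
  2:{ intros a; rewrite rsum_scal; reflexivity. }
  2:{ intros a; rewrite rsum_scal; reflexivity. }
  rewrite !rsum_scal_r.
  pose proof (rsum_tl m M); pose proof (rsum_ee M).
  assert (0 <= rsum (tl m) (rng M)) by (apply rsum_nonneg, tl_nonneg).
  assert (0 <= rsum ee (rng M)) by (apply rsum_nonneg; intros; apply Rlt_le, ee_pos).
  apply Rmult_le_compat_l; auto. nra.
Qed.

Lemma small_pow K (hK : 0 <= K) eps : 0 < eps -> exists m : nat, K * (12 * (/2) ^ m) < eps.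
Proof.
  intros He.
  destruct (pow_lt_1_zero (/2)) with (y := eps / (12 * K + 1)) as [m Hm].
  - rewrite Rabs_pos_eq; lra.
  - apply Rdiv_lt_0_compat; lra.
  - exists m. specialize (Hm m (le_n _)).
    rewrite Rabs_pos_eq in Hm by (apply pow_le; lra).
    apply Rmult_lt_compat_l with (r := 12 * K + 1) in Hm; [|lra].
    replace ((12 * K + 1) * (eps / (12 * K + 1))) with eps in Hm by (field; lra).
    assert (0 <= (/2) ^ m) by (apply pow_le; lra). nra.
Qed.

Lemma box_incl a b : (a <= b)%nat -> incl (box a) (box b).
Proof. intros H [x y]; rewrite !In_box; lia. Qed.

Lemma conv_box (f : Z * Z -> C) K (hK : 0 <= K) (hb : forall n, Cmod (f n) <= K * bb n) :
  exists L, filterlim (fun N => csum f (box N)) eventually (locally L).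
Proof.
  apply (proj1 (filterlim_locally_cauchy (U := C_CompleteNormedModule) (F := eventually) (fun N => csum f (box N)))).
  intros eps. destruct (small_pow K hK eps (cond_pos eps)) as [m Hm].
  exists (fun N => (m <= N)%nat). split; [exists m; auto|].
  intros u v Hu Hv. apply (@norm_compat1 C_AbsRing C_NormedModule).
  change (Cmod (csum f (box v) - csum f (box u))%C < eps).
  destruct (Nat.le_gt_cases u v).
  - eapply Rle_lt_trans; [|exact Hm].
    apply core; auto. apply NoDup_box. apply box_incl; auto.
    intros n Hn _. apply (box_incl m u); auto.
  - rewrite <- Cmod_opp.
    replace (- (csum f (box v) - csum f (box u)))%C with (csum f (box u) - csum f (box v))%C by ring.
    eapply Rle_lt_trans; [|exact Hm].
    apply core; auto. apply NoDup_box. apply box_incl; lia.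
    intros n Hn _. apply (box_incl m v); auto.
Qed.

Lemma conv_list (f : Z * Z -> C) K (hK : 0 <= K) (hb : forall n, Cmod (f n) <= K * bb n) (L : C)
  (HL : filterlim (fun N => csum f (box N)) eventually (locally L))
  (l : nat -> list (Z * Z)) (Hnd : forall N, NoDup (l N))
  (Hin : forall N, exists M, incl (l N) (box M))
  (Hcov : forall m, exists N0, forall N, (N0 <= N)%nat ->
            forall n, In n (box m) -> f n <> RtoC 0 -> In n (l N)) :
  filterlim (fun N => csum f (l N)) eventually (locally L).
Proof.
  apply (proj2 (filterlim_locally_ball_norm (K := C_AbsRing) (U := C_NormedModule) (F := eventually) _ L)).
  intros eps.
  assert (He2 : 0 < eps / 2) by (pose proof (cond_pos eps); lra).
  destruct (small_pow K hK (eps / 2) He2) as [m Hm].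
  destruct (Hcov m) as [N0 HN0]. exists N0. intros N HN.
  destruct (Hin N) as [M0 HM0].
  pose proof (proj1 (filterlim_locally_ball_norm (K := C_AbsRing) (U := C_NormedModule) (F := eventually) _ L) HL) as HL'.
  destruct (HL' (mkposreal _ He2)) as [N1 HN1].
  set (M := Nat.max M0 N1).
  specialize (HN1 M ltac:(lia)). unfold ball_norm in *. simpl in HN1.
  change (Cmod (csum f (l N) - L)%C < eps).
  change (Cmod (csum f (box M) - L)%C < eps / 2) in HN1.
  assert (Hc : Cmod (csum f (box M) - csum f (l N))%C <= K * (12 * (/2) ^ m)).
  { apply core; auto.
    intros x Hx; apply (box_incl M0 M); [lia|]. auto. }
  replace (csum f (l N) - L)%C with ((csum f (box M) - L) + - (csum f (box M) - csum f (l N)))%C by ring.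
  eapply Rle_lt_trans; [apply Cmod_triangle|]. rewrite Cmod_opp. lra.
Qed.
Close Scope Z_scope.
Open Scope R_scope.

Lemma exp_mono_le x y : x <= y -> exp x <= exp y.
Proof. intros [H|H]; [apply Rlt_le, exp_increasing; auto| subst; lra]. Qed.

Lemma Cmod_cexp z : Cmod (cexp z) = exp (Re z).
Proof.
  unfold cexp, Cmod; cbn [fst snd].
  replace ((exp (Re z) * cos (Im z)) ^ 2 + (exp (Re z) * sin (Im z)) ^ 2)
    with (exp (Re z) ^ 2 * (sin (Im z) ^ 2 + cos (Im z) ^ 2)) by ring.
  replace (sin (Im z) ^ 2 + cos (Im z) ^ 2) with 1 by (pose proof (sin2_cos2 (Im z)) as H; unfold Rsqr in H; nra).
  rewrite Rmult_1_r. apply sqrt_pow2. apply Rlt_le, exp_pos.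
Qed.

Lemma Cmod_qpow tau x : Cmod (qpow tau x) = exp (- (2 * PI * x * Im tau)).
Proof.
  unfold qpow. rewrite Cmod_cexp. f_equal. destruct tau as [a b].
  unfold Re, Im, Ci, RtoC; simpl. ring.
Qed.

Lemma cexp_add z w : (cexp z * cexp w)%C = cexp (z + w)%C.
Proof.
  destruct z as [a b]; destruct w as [c d]; unfold cexp; simpl.
  rewrite exp_plus, cos_plus, sin_plus. unfold Cmult; simpl. f_equal; ring.
Qed.

Lemma qpow_add tau x y : (qpow tau x * qpow tau y)%C = qpow tau (x + y).
Proof.
  unfold qpow. rewrite cexp_add. f_equal. destruct tau as [a b].
  unfold Ci, RtoC, Cmult, Cplus; simpl. f_equal; ring.
Qed.

Definition theta (p : Z) (tau : C) (n : Z * Z) : C :=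
  qpow tau (IZR p * Qf (IZR (fst n) - / IZR p) (IZR (snd n) - / IZR p)).

Lemma exp_neg_nat k : exp (- INR k) <= (/ 2) ^ k.
Proof.
  induction k.
  - simpl. rewrite Ropp_0, exp_0; lra.
  - rewrite S_INR, Ropp_plus_distr, exp_plus. simpl.
    assert (He : exp (- (1)) <= / 2).
    { rewrite exp_Ropp. pose proof (exp_ineq1_le 1).
      apply Rinv_le_contravar; lra. }
    pose proof (exp_pos (- INR k)). pose proof (exp_pos (- (1))). nra.
Qed.

Lemma exp_neg_ee n : exp (- Rabs (IZR n)) <= ee n.
Proof.
  unfold ee. rewrite <- abs_IZR, <- Nat2Z.inj_abs_nat, <- INR_IZR_INZ.
  apply exp_neg_nat.
Qed.

Lemma sq_shift (n c : R) : 0 < c <= / 2 -> (n - c) ^ 2 >= n ^ 2 - Rabs n.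
Proof.
  intros Hc. destruct (Rle_or_lt 0 n).
  - rewrite Rabs_pos_eq by lra. nra.
  - rewrite Rabs_left by lra. nra.
Qed.

Lemma theta_bound (p : Z) (tau : C) (hp : (2 <= p)%Z) (hy : 0 < Im tau) (A : R) (hA : 0 <= A) n :
  let kap := PI * Im tau * IZR p in
  Cmod (theta p tau n) * (A + 2 * (Rabs (IZR (fst n)) + Rabs (IZR (snd n)))) <=
  ((A + 1) * exp ((3 + kap) ^ 2 / (2 * kap))) * bb n.
Proof.
  intros kap.
  assert (Hp : 2 <= IZR p) by (apply IZR_le; lia).
  assert (Hkap : 0 < kap) by (unfold kap; pose proof PI_RGT_0; apply Rmult_lt_0_compat; [nra|lra]).
  set (u := Rabs (IZR (fst n))). set (v := Rabs (IZR (snd n))).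
  assert (Hu : 0 <= u) by apply Rabs_pos. assert (Hv : 0 <= v) by apply Rabs_pos.
  unfold theta. rewrite Cmod_qpow.
  assert (HQ : IZR p * Qf (IZR (fst n) - / IZR p) (IZR (snd n) - / IZR p) >=
               IZR p / 2 * (u ^ 2 - u + v ^ 2 - v)).
  { assert (Hc : 0 < / IZR p <= / 2).
    { split; [apply Rinv_0_lt_compat; lra| apply Rinv_le_contravar; lra]. }
    pose proof (sq_shift (IZR (fst n)) _ Hc) as H1.
    pose proof (sq_shift (IZR (snd n)) _ Hc) as H2.
    fold u in H1. fold v in H2.
    replace (IZR (fst n) ^ 2) with (u ^ 2) in H1 by (unfold u; rewrite <- Rsqr_pow2, <- Rsqr_abs, Rsqr_pow2; reflexivity).
    replace (IZR (snd n) ^ 2) with (v ^ 2) in H2 by (unfold v; rewrite <- Rsqr_pow2, <- Rsqr_abs, Rsqr_pow2; reflexivity).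
    unfold Qf.
    set (x1 := IZR (fst n) - / IZR p) in *. set (x2 := IZR (snd n) - / IZR p) in *.
    assert (x1 ^ 2 + x2 ^ 2 - x1 * x2 >= (x1 ^ 2 + x2 ^ 2) / 2) by (pose proof (pow2_ge_0 (x1 - x2)); lra).
    assert (0 <= IZR p * (x1 ^ 2 + x2 ^ 2 - x1 * x2 - (u ^ 2 - u + v ^ 2 - v) / 2))
      by (apply Rmult_le_pos; lra).
    lra. }
  assert (Hexp : exp (- (2 * PI * (IZR p * Qf (IZR (fst n) - / IZR p) (IZR (snd n) - / IZR p)) * Im tau))
                 <= exp (- (kap * (u ^ 2 - u + v ^ 2 - v)))).
  { apply exp_mono_le. unfold kap. pose proof PI_RGT_0.
    assert (0 < PI * Im tau) by (apply Rmult_lt_0_compat; lra).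
    set (Qv := IZR p * Qf (IZR (fst n) - / IZR p) (IZR (snd n) - / IZR p)) in *.
    replace (- (2 * PI * Qv * Im tau)) with (- (2 * (PI * Im tau) * Qv)) by ring.
    replace (- (PI * Im tau * IZR p * (u ^ 2 - u + v ^ 2 - v))) with
      (- (2 * (PI * Im tau) * (IZR p / 2 * (u ^ 2 - u + v ^ 2 - v)))) by (field).
    apply Ropp_le_contravar. apply Rmult_le_compat_l; lra. }
  assert (Hlin : A + 2 * (u + v) <= (A + 1) * exp (2 * u + 2 * v)).
  { pose proof (exp_ineq1_le (2 * u + 2 * v)).
    assert (0 <= (A + 1) * (exp (2 * u + 2 * v) - (1 + (2 * u + 2 * v)))) by (apply Rmult_le_pos; lra).
    assert (0 <= A * (u + v)) by (apply Rmult_le_pos; lra).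
    nra. }
  assert (Hq : forall w, 0 <= w -> (3 + kap) * w - kap * w ^ 2 <= (3 + kap) ^ 2 / (4 * kap)).
  { intros w Hw. apply Rmult_le_reg_l with (r := 4 * kap); [lra|].
    replace (4 * kap * ((3 + kap) ^ 2 / (4 * kap))) with ((3 + kap) ^ 2) by (field; lra).
    pose proof (pow2_ge_0 (2 * kap * w - (3 + kap))). nra. }
  pose proof (Hq u Hu) as Hqu. pose proof (Hq v Hv) as Hqv.
  assert (Hfin : exp (2 * u + 2 * v) * exp (- (kap * (u ^ 2 - u + v ^ 2 - v))) <=
                 exp ((3 + kap) ^ 2 / (2 * kap)) * (exp (- u) * exp (- v))).
  { rewrite <- !exp_plus. apply exp_mono_le.
    replace ((3 + kap) ^ 2 / (2 * kap)) with (2 * ((3 + kap) ^ 2 / (4 * kap))) by (field; lra).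
    nra. }
  unfold bb. pose proof (exp_neg_ee (fst n)) as E1. pose proof (exp_neg_ee (snd n)) as E2.
  fold u in E1. fold v in E2.
  pose proof (exp_pos (- u)). pose proof (exp_pos (- v)).
  pose proof (exp_pos (2 * u + 2 * v)). pose proof (exp_pos ((3 + kap) ^ 2 / (2 * kap))).
  set (T := exp (- (2 * PI * (IZR p * Qf (IZR (fst n) - / IZR p) (IZR (snd n) - / IZR p)) * Im tau))) in *.
  assert (0 <= T) by (unfold T; apply Rlt_le, exp_pos).
  set (Eq := exp (- (kap * (u ^ 2 - u + v ^ 2 - v)))) in *.
  set (E0 := exp ((3 + kap) ^ 2 / (2 * kap))) in *.
  set (Ew := exp (2 * u + 2 * v)) in *.
  assert (T * (A + 2 * (u + v)) <= Eq * ((A + 1) * Ew)).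
  { apply Rmult_le_compat; try lra. }
  assert (Eq * ((A + 1) * Ew) <= (A + 1) * (E0 * (exp (- u) * exp (- v)))) by nra.
  assert (exp (- u) * exp (- v) <= ee (fst n) * ee (snd n)) by (apply Rmult_le_compat; lra).
  assert (0 <= (A + 1) * E0 * (ee (fst n) * ee (snd n) - exp (- u) * exp (- v))) by (apply Rmult_le_pos; [apply Rmult_le_pos|]; lra). lra.
Qed.

Definition qrng (N : nat) : list Z := map Z.of_nat (seq 0 (S N)).
Definition qbox (N : nat) : list (Z * Z) := list_prod (qrng N) (qrng N).

Lemma In_qbox N x y : In (x, y) (qbox N) <-> (0 <= x <= Z.of_nat N /\ 0 <= y <= Z.of_nat N)%Z.
Proof.
  unfold qbox, qrng. rewrite in_prod_iff, !in_map_iff. split.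
  - intros [[i [<- Hi]] [j [<- Hj]]]. apply in_seq in Hi; apply in_seq in Hj. lia.
  - intros H. split.
    + exists (Z.to_nat x); split; [lia|]. apply in_seq; lia.
    + exists (Z.to_nat y); split; [lia|]. apply in_seq; lia.
Qed.

Lemma NoDup_qbox N : NoDup (qbox N).
Proof.
  apply NoDup_prod; apply FinFun.Injective_map_NoDup; try apply seq_NoDup;
  intros a b H; lia.
Qed.

Lemma PerW (p : Z) (tau : C) (hp : (2 <= p)%Z) (hy : 0 < Im tau) (r1 r2 : Z)
  (act act' : Z -> Z -> Z * Z)
  (H1 : forall a b, act' (fst (act a b)) (snd (act a b)) = (a, b))
  (H2 : forall a b, act (fst (act' a b)) (snd (act' a b)) = (a, b))
  (H3 : forall a b, (Z.abs (fst (act a b)) + Z.abs (snd (act a b)) <= 2 * (Z.abs a + Z.abs b))%Z)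
  (H4 : forall a b, (Z.abs (fst (act' a b)) + Z.abs (snd (act' a b)) <= 2 * (Z.abs a + Z.abs b))%Z) :
  exists L : C,
   filterlim (fun N => csum (fun n => (theta p tau n *
      RtoC (IZR (Mz (fst (act' (fst n) (snd n)) - r1) (snd (act' (fst n) (snd n)) - r2))))%C) (box N))
     eventually (locally L) /\
   filterlim (fun N => csum (fun k => (RtoC (IZR (Mz (fst k) (snd k))) *
      theta p tau (act (fst k + r1)%Z (snd k + r2)%Z))%C) (qbox N)) eventually (locally L).
Proof.
  set (f := fun n : Z * Z => (theta p tau n *
      RtoC (IZR (Mz (fst (act' (fst n) (snd n)) - r1) (snd (act' (fst n) (snd n)) - r2))))%C).
  set (A := IZR (Z.abs r1 + Z.abs r2)).
  assert (hA : 0 <= A) by (apply IZR_le; lia).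
  set (kap := PI * Im tau * IZR p).
  set (K := (A + 1) * exp ((3 + kap) ^ 2 / (2 * kap))).
  assert (hK : 0 <= K) by (unfold K; pose proof (exp_pos ((3 + kap) ^ 2 / (2 * kap))); nra).
  assert (hb : forall n, Cmod (f n) <= K * bb n).
  { intros [n1 n2]. unfold f. rewrite Cmod_mult, Cmod_R.
    eapply Rle_trans; [|apply (theta_bound p tau hp hy A hA (n1, n2))].
    apply Rmult_le_compat_l; [apply Cmod_ge_0|]. cbn [fst snd].
    specialize (H4 n1 n2).
    set (a := fst (act' n1 n2)) in *. set (b := snd (act' n1 n2)) in *.
    assert (HM : (0 <= Mz (a - r1) (b - r2) <= Z.abs r1 + Z.abs r2 + 2 * (Z.abs n1 + Z.abs n2))%Z)
      by (unfold Mz; lia).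
    rewrite Rabs_pos_eq by (apply IZR_le; lia).
    unfold A. rewrite <- !abs_IZR. assert (HR : IZR (Z.abs r1 + Z.abs r2 + 2 * (Z.abs n1 + Z.abs n2)) = IZR (Z.abs r1 + Z.abs r2) + 2 * (IZR (Z.abs n1) + IZR (Z.abs n2))) by (rewrite !plus_IZR, mult_IZR, plus_IZR; reflexivity). rewrite <- HR. apply IZR_le. lia. }
  destruct (conv_box f K hK hb) as [L HL]. exists L. split; [exact HL|].
  set (phi := fun k : Z * Z => act (fst k + r1)%Z (snd k + r2)%Z).
  apply (filterlim_ext (fun N => csum f (map phi (qbox N)))).
  { intros N. rewrite csum_map. apply csum_ext. intros [k1 k2].
    unfold f, phi; cbn [fst snd]. rewrite H1; cbn [fst snd].
    replace (k1 + r1 - r1)%Z with k1 by lia. replace (k2 + r2 - r2)%Z with k2 by lia.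
    apply Cmult_comm. }
  apply (conv_list f K hK hb L HL).
  - intros N. apply FinFun.Injective_map_NoDup; [|apply NoDup_qbox].
    intros [x1 x2] [y1 y2] H. unfold phi in H; cbn [fst snd] in H.
    pose proof (f_equal (fun z => act' (fst z) (snd z)) H) as H'. cbn beta in H'.
    rewrite !H1 in H'. injection H' as E1 E2. f_equal; lia.
  - intros N. exists (Z.to_nat (4 * Z.of_nat N + 2 * (Z.abs r1 + Z.abs r2))).
    intros [n1 n2] Hn. apply in_map_iff in Hn. destruct Hn as [[k1 k2] [Hk Hin]].
    apply In_qbox in Hin. unfold phi in Hk; cbn [fst snd] in Hk.
    specialize (H3 (k1 + r1)%Z (k2 + r2)%Z). rewrite Hk in H3. cbn [fst snd] in H3.
    apply In_box. lia.
  - intros m. exists (Z.to_nat (4 * Z.of_nat m + Z.abs r1 + Z.abs r2)).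
    intros N HN [n1 n2] Hn Hf. apply In_box in Hn.
    apply in_map_iff.
    exists (fst (act' n1 n2) - r1, snd (act' n1 n2) - r2)%Z.
    split.
    + unfold phi; cbn [fst snd].
      replace (fst (act' n1 n2) - r1 + r1)%Z with (fst (act' n1 n2)) by lia.
      replace (snd (act' n1 n2) - r2 + r2)%Z with (snd (act' n1 n2)) by lia.
      apply H2.
    + assert (HM : Mz (fst (act' n1 n2) - r1) (snd (act' n1 n2) - r2) <> 0%Z).
      { intros E. apply Hf. unfold f; cbn [fst snd]. rewrite E. apply Cmult_0_r. }
      specialize (H4 n1 n2).
      apply In_qbox. unfold Mz in HM. lia.
Qed.
Close Scope Z_scope.
Open Scope R_scope.

Lemma sum_n_csum (a : nat -> C) n : @eq C (sum_n a n) (csum a (seq 0 (S n))).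
Proof.
  induction n.
  - rewrite sum_O. simpl. ring.
  - rewrite sum_Sn, IHn, (seq_S (S n) 0), csum_app. replace (0 + S n)%nat with (S n) by lia. change (plus (csum a (seq 0 (S n))) (a (S n))) with (Cplus (csum a (seq 0 (S n))) (a (S n))). unfold csum at 3. cbn [fold_right]. ring.
Qed.

Lemma box_sum (h : Z * Z -> C) N :
  sum_n (fun i => sum_n (fun j => h (Z.of_nat i - Z.of_nat N, Z.of_nat j - Z.of_nat N)%Z) (2 * N)) (2 * N)
  = csum h (box N).
Proof.
  unfold box. rewrite csum_prod. unfold rng. rewrite csum_map.
  rewrite sum_n_csum. replace (S (2 * N)) with (2 * N + 1)%nat by lia.
  apply csum_ext; intros i. rewrite sum_n_csum, csum_map.
  replace (S (2 * N)) with (2 * N + 1)%nat by lia. reflexivity.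
Qed.

Lemma qbox_sum (h : Z * Z -> C) N :
  sum_n (fun i => sum_n (fun j => h (Z.of_nat i, Z.of_nat j)) N) N = csum h (qbox N).
Proof.
  unfold qbox. rewrite csum_prod. unfold qrng. rewrite csum_map, sum_n_csum.
  apply csum_ext; intros i. rewrite sum_n_csum, csum_map. reflexivity.
Qed.

Lemma csum_lin6 {A} (f1 f2 f3 f4 f5 f6 : A -> C) l :
  csum (fun x => f1 x - f2 x - f3 x + f4 x + f5 x - f6 x)%C l =
  (csum f1 l - csum f2 l - csum f3 l + csum f4 l + csum f5 l - csum f6 l)%C.
Proof. induction l; simpl; [ring|]. rewrite IHl. ring. Qed.

Lemma lim_plus (a b : nat -> C) (A B : C) :
  filterlim a eventually (locally A) -> filterlim b eventually (locally B) ->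
  filterlim (fun N => a N + b N)%C eventually (locally (A + B)%C).
Proof.
  intros Ha Hb.
  apply (filterlim_comp_2 a b Cplus Ha Hb).
  exact (filterlim_plus (K := C_AbsRing) (V := C_NormedModule) A B).
Qed.

Lemma lim_opp (a : nat -> C) (A : C) :
  filterlim a eventually (locally A) ->
  filterlim (fun N => - a N)%C eventually (locally (- A)%C).
Proof.
  intros Ha.
  apply (filterlim_comp _ _ _ a Copp eventually (locally A) (locally (- A)%C) Ha).
  exact (filterlim_opp (K := C_AbsRing) (V := C_NormedModule) A).
Qed.

Lemma lim_lin6 (a1 a2 a3 a4 a5 a6 : nat -> C) (L1 L2 L3 L4 L5 L6 : C) :
  filterlim a1 eventually (locally L1) -> filterlim a2 eventually (locally L2) ->
  filterlim a3 eventually (locally L3) -> filterlim a4 eventually (locally L4) ->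
  filterlim a5 eventually (locally L5) -> filterlim a6 eventually (locally L6) ->
  filterlim (fun N => a1 N - a2 N - a3 N + a4 N + a5 N - a6 N)%C eventually
    (locally (L1 - L2 - L3 + L4 + L5 - L6)%C).
Proof.
  intros H1 H2 H3 H4 H5 H6.
  repeat apply lim_plus; auto; apply lim_opp; auto.
Qed.
Close Scope Z_scope.
Open Scope R_scope.

Definition a_id (a b : Z) : Z * Z := (a, b).
Definition a_s1 (a b : Z) : Z * Z := (- a + b, b)%Z.
Definition a_s2 (a b : Z) : Z * Z := (a, - b + a)%Z.
Definition a_r1 (a b : Z) : Z * Z := (- b, - b + a)%Z.
Definition a_r2 (a b : Z) : Z * Z := (- a + b, - a)%Z.
Definition a_w0 (a b : Z) : Z * Z := (- b, - a)%Z.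

Definition Th (tau : C) (pz u v : R) : C := qpow tau (pz * Qf (u - / pz) (v - / pz)).

Lemma six tau (pz x y : R) : pz <> 0 ->
  (qpow tau (pz * Qf (x - / pz) (y - / pz)) *
   (RtoC 1 + - qpow tau (2 * x - y) + - qpow tau (2 * y - x) + qpow tau (3 * x)
      + qpow tau (3 * y) + - qpow tau (2 * x + 2 * y)))%C
  = (Th tau pz x y - Th tau pz (- x + y) y - Th tau pz x (- y + x) + Th tau pz (- x + y) (- x)
     + Th tau pz (- y) (- y + x) - Th tau pz (- y) (- x))%C.
Proof.
  intros Hp.
  set (T := qpow tau (pz * Qf (x - / pz) (y - / pz))).
  transitivity (T - T * qpow tau (2 * x - y) - T * qpow tau (2 * y - x) + T * qpow tau (3 * x)
      + T * qpow tau (3 * y) - T * qpow tau (2 * x + 2 * y))%C; [ring|].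
  unfold T, Th. rewrite !qpow_add.
  replace (pz * Qf (x - / pz) (y - / pz) + (2 * x - y)) with (pz * Qf (- x + y - / pz) (y - / pz))
    by (unfold Qf; field; auto).
  replace (pz * Qf (x - / pz) (y - / pz) + (2 * y - x)) with (pz * Qf (x - / pz) (- y + x - / pz))
    by (unfold Qf; field; auto).
  replace (pz * Qf (x - / pz) (y - / pz) + (3 * x)) with (pz * Qf (- x + y - / pz) (- x - / pz))
    by (unfold Qf; field; auto).
  replace (pz * Qf (x - / pz) (y - / pz) + (3 * y)) with (pz * Qf (- y - / pz) (- y + x - / pz))
    by (unfold Qf; field; auto).
  replace (pz * Qf (x - / pz) (y - / pz) + (2 * x + 2 * y)) with (pz * Qf (- y - / pz) (- x - / pz))
    by (unfold Qf; field; auto).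
  ring.
Qed.

Definition ffun (p : Z) (tau : C) (r1 r2 : Z) (act' : Z -> Z -> Z * Z) (n : Z * Z) : C :=
  (theta p tau n *
      RtoC (IZR (Mz (fst (act' (fst n) (snd n)) - r1) (snd (act' (fst n) (snd n)) - r2))))%C.
Definition gfun (p : Z) (tau : C) (r1 r2 : Z) (act : Z -> Z -> Z * Z) (k : Z * Z) : C :=
  (RtoC (IZR (Mz (fst k) (snd k))) * theta p tau (act (fst k + r1)%Z (snd k + r2)%Z))%C.

Lemma Fpoint p tau r1 r2 n :
  (theta p tau n * RtoC (IZR (lcoeff (gdef (fst n) (snd n)) r1 r2)))%C =
  (ffun p tau r1 r2 a_id n - ffun p tau r1 r2 a_s1 n - ffun p tau r1 r2 a_s2 n
   + ffun p tau r1 r2 a_r1 n + ffun p tau r1 r2 a_r2 n - ffun p tau r1 r2 a_w0 n)%C.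
Proof.
  rewrite lcoeff_g. unfold multW, zsum, Wl, ffun, a_id, a_s1, a_s2, a_r1, a_r2, a_w0.
  cbn [fold_right fst snd].
  rewrite !plus_IZR, !mult_IZR, !RtoC_plus, !RtoC_mult.
  replace (IZR (-1)) with (- (1)) by reflexivity. rewrite RtoC_opp. ring.
Qed.

Lemma Gpoint p tau r1 r2 (hp : (2 <= p)%Z) (i j : nat) :
  (RtoC (INR (Nat.min i j)) *
   (qpow tau (IZR p * Qf (INR i + IZR r1 - / IZR p) (INR j + IZR r2 - / IZR p)) *
    (RtoC 1 + - qpow tau (2 * (INR i + IZR r1) - (INR j + IZR r2))
       + - qpow tau (2 * (INR j + IZR r2) - (INR i + IZR r1))
       + qpow tau (3 * (INR i + IZR r1)) + qpow tau (3 * (INR j + IZR r2))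
       + - qpow tau (2 * (INR i + IZR r1) + 2 * (INR j + IZR r2)))))%C =
  (gfun p tau r1 r2 a_id (Z.of_nat i, Z.of_nat j) - gfun p tau r1 r2 a_s1 (Z.of_nat i, Z.of_nat j)
   - gfun p tau r1 r2 a_s2 (Z.of_nat i, Z.of_nat j) + gfun p tau r1 r2 a_r1 (Z.of_nat i, Z.of_nat j)
   + gfun p tau r1 r2 a_r2 (Z.of_nat i, Z.of_nat j) - gfun p tau r1 r2 a_w0 (Z.of_nat i, Z.of_nat j))%C.
Proof.
  assert (Hp : IZR p <> 0) by (apply not_0_IZR; lia).
  rewrite six by exact Hp.
  replace (INR (Nat.min i j)) with (IZR (Mz (Z.of_nat i) (Z.of_nat j)))
    by (rewrite INR_IZR_INZ; f_equal; unfold Mz; lia).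
  unfold gfun, theta, Th, a_id, a_s1, a_s2, a_r1, a_r2, a_w0. cbn [fst snd].
  repeat rewrite ?plus_IZR, ?opp_IZR. rewrite <- !INR_IZR_INZ. ring.
Qed.

Ltac solve_act := intros; cbv [a_id a_s1 a_s2 a_r1 a_r2 a_w0 fst snd];
  first [reflexivity | f_equal; lia | lia].

Theorem proposition3p2 (p : Z) (hp : (2 <= p)%Z) :
  exists g : Z -> Z -> lpoly,
    (forall n1 n2 : Z, is_quotient (g n1 n2) n1 n2) /\
    forall (tau : C), 0 < Im tau -> forall r1 r2 : Z,
      exists L : C,
        filterlim (Fcoeff_partial p g tau r1 r2) eventually (locally L) /\
        filterlim (G_partial p tau (IZR r1) (IZR r2)) eventually (locally L).
Proof.
  exists gdef. split; [intros; apply gdef_quot|].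
  intros tau hy r1 r2.
  destruct (PerW p tau hp hy r1 r2 a_id a_id) as [L1 [F1 G1]]; try solve_act.
  destruct (PerW p tau hp hy r1 r2 a_s1 a_s1) as [L2 [F2 G2]]; try solve_act.
  destruct (PerW p tau hp hy r1 r2 a_s2 a_s2) as [L3 [F3 G3]]; try solve_act.
  destruct (PerW p tau hp hy r1 r2 a_r1 a_r2) as [LA [FA GA]]; try solve_act.
  destruct (PerW p tau hp hy r1 r2 a_r2 a_r1) as [LB [FB GB]]; try solve_act.
  destruct (PerW p tau hp hy r1 r2 a_w0 a_w0) as [L6 [F6 G6]]; try solve_act.
  exists (L1 - L2 - L3 + LB + LA - L6)%C. split.
  - apply (filterlim_ext (fun N =>
      (csum (ffun p tau r1 r2 a_id) (box N) - csum (ffun p tau r1 r2 a_s1) (box N)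
       - csum (ffun p tau r1 r2 a_s2) (box N) + csum (ffun p tau r1 r2 a_r1) (box N)
       + csum (ffun p tau r1 r2 a_r2) (box N) - csum (ffun p tau r1 r2 a_w0) (box N))%C)).
    + intros N. rewrite <- csum_lin6.
      rewrite <- (csum_ext (fun n => theta p tau n * RtoC (IZR (lcoeff (gdef (fst n) (snd n)) r1 r2)))%C)
        by (intros; apply Fpoint).
      rewrite <- box_sum. reflexivity.
    + apply lim_lin6; assumption.
  - apply (filterlim_ext (fun N =>
      (csum (gfun p tau r1 r2 a_id) (qbox N) - csum (gfun p tau r1 r2 a_s1) (qbox N)
       - csum (gfun p tau r1 r2 a_s2) (qbox N) + csum (gfun p tau r1 r2 a_r1) (qbox N)
       + csum (gfun p tau r1 r2 a_r2) (qbox N) - csum (gfun p tau r1 r2 a_w0) (qbox N))%C)).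
    + intros N. rewrite <- csum_lin6. rewrite <- qbox_sum.
      unfold G_partial. apply sum_n_ext; intros i. apply sum_n_ext; intros j.
      symmetry. apply Gpoint; exact hp.
    + replace (L1 - L2 - L3 + LB + LA - L6)%C with (L1 - L2 - L3 + LA + LB - L6)%C by ring.
      apply lim_lin6; assumption.
Qed.
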